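(* Let $n\geq1$, $\sigma\in PGL_{2n+2}(\mathbb{C})$ and let $\tilde\sigma\in GL_{2n+2}(\mathbb{C})$ be a representative of $\sigma$. If $\operatorname{rank}(\tilde\sigma-\alpha I)\geq n+1$ for every $\alpha\in\mathbb{C}$, then there is an $n$-dimensional projective linear subspace $\ell\subset\mathbb{P}^{2n+1}$ such that $\sigma(\ell)\cap\ell=\emptyset$. *)

(* Defs.v *)
(* The complex numbers are modelled as R[i] = complex R for an
   arbitrary R : realType (mathcomp-real-closed's complex; a closedFieldType). *)
From mathcomp Require Import all_boot all_algebra.
From mathcomp Require Export reals complex.
Set Implicit Arguments.
Unset Strict Implicit.
Unset Printing Implicit Defensive.
Import GRing.Theory Num.Theory.
Local Open Scope ring_scope.

(* Image of the linear subspace spanned by the rows of L under the linear map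
   v |-> A v (A acting on column vectors); in row coordinates v^T |-> v^T A^T. *)
Definition mx_image (F : fieldType) (m k : nat) (A : 'M[F]_k) (L : 'M[F]_(m, k))
  : 'M[F]_(m, k) := L *m A^T.

(* Main.v *)
Require Import Defs.
From mathcomp Require Import all_boot all_algebra.
From mathcomp Require Import reals complex.
From mathcomp Require Import zify.
From Stdlib Require Import Classical.
Import GRing.Theory Num.Theory.
Local Open Scope ring_scope.
Set Implicit Arguments.
Unset Strict Implicit.
Unset Printing Implicit Defensive.
Section Aux.
Variable F : fieldType.

Definition good n (B : 'M[F]_n) m (L : 'M[F]_(m, n)) :=
  forall u : 'rV_n, (u <= L)%MS -> (u *m B <= L)%MS -> u = 0.

Lemma rank2 n (x y : 'rV[F]_n) : x != 0 -> ~~ (y <= x)%MS -> \rank (col_mx x y) = 2%N.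
Proof.
move=> x0 yx; apply/eqP; rewrite eqn_leq rank_leq_row /=.
have sx : (x <= col_mx x y)%MS by rewrite -addsmxE addsmxSl.
have := mxrank_leqif_sup sx; rewrite rank_rV x0 => /ltn_leqif ->.
apply: contra yx => H; apply: submx_trans H; by rewrite -addsmxE addsmxSr.
Qed.

Lemma good_conj n (B P : 'M[F]_n) m (L : 'M_(m, n)) : P \in unitmx ->
  good (P *m B *m invmx P) L -> good B (L *m P).
Proof.
move=> Pu gL u uL uBL.
have Pf : row_free P by rewrite row_free_unit.
have e1 : (u *m invmx P <= L)%MS by rewrite -(submxMfree _ _ Pf) mulmxKV.
have e2 : (u *m invmx P *m (P *m B *m invmx P) <= L)%MS.
  by rewrite !mulmxA mulmxKV // -(submxMfree _ _ Pf) mulmxKV.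
have := gL _ e1 e2 => /(congr1 (mulmx^~ P)); rewrite mulmxKV // mul0mx; exact: id.
Qed.

Lemma good_block p q (C : 'M[F]_p) (X : 'M_(q,p)) (D : 'M_q) r s
   (l1 : 'M_(r,p)) (L2 : 'M_(s,q)) :
  good C l1 -> good D L2 -> good (block_mx C 0 X D) (block_mx l1 0 0 L2).
Proof.
move=> g1 g2 u /submxP[a ->] /submxP[b].
rewrite -[a]hsubmxK -[b]hsubmxK !mul_row_block !mulmx0 !addr0 !add0r.
move=> /eq_row_mx[E1 E2].
have h2 : rsubmx a *m L2 = 0.
  by apply: g2; [exact: submxMl | rewrite E2 submxMl].
rewrite h2 mul0mx addr0 in E1.
have h1 : lsubmx a *m l1 = 0.
  by apply: g1; [exact: submxMl | rewrite E1 submxMl].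
by rewrite h1 h2 row_mx0.
Qed.


Lemma rank_block_le q (C : 'M[F]_2) (X : 'M_(q,2)) (D : 'M_q) :
  (\rank (block_mx C 0 X D) <= \rank D + 2)%N /\
  (~~ (row_mx (1%:M : 'M_2) (0 : 'M_(2, q)) <= block_mx C 0 X D)%MS ->
     (\rank (block_mx C 0 X D) <= \rank D + 1)%N).
Proof.
set M := block_mx C 0 X D; set W := row_mx (1%:M : 'M_2) (0 : 'M_(2, q)).
set G := block_mx (1%:M : 'M_2) 0 0 D.
have rG : \rank G = (2 + \rank D)%N by rewrite rank_diag_block_mx mxrank1.
have rW : \rank W = 2%N by rewrite rank_row_mx0 mxrank1.
have MG : (M <= G)%MS.
  apply/submxP; exists (block_mx C 0 X 1%:M).
  by rewrite mulmx_block !mulmx0 !mul0mx !mulmx1 !mul1mx !addr0 !add0r.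
have WG : (W <= G)%MS.
  apply/submxP; exists W.
  by rewrite /W mul_row_block !mulmx0 !mul0mx !mulmx1 !addr0.
have sum := mxrank_sum_cap M W.
have rS : (\rank (M + W) <= \rank G)%N by apply: mxrankS; rewrite addsmx_sub MG WG.
have rc : (\rank (M :&: W) <= \rank W)%N by apply: mxrankS; exact: capmxSr.
split; first by lia.
move=> nWM.
have rc1 : (\rank (M :&: W) < \rank W)%N.
  rewrite (ltn_leqif (mxrank_leqif_sup (capmxSr M W))).
  apply: contra nWM => H; apply: submx_trans H _; exact: capmxSl.
lia.
Qed.

Lemma complete_basis q (W : 'M[F]_(2, 2 + q)) : \rank W = 2%N ->
  exists P : 'M_(2 + q), P \in unitmx /\ usubmx P = W.
Proof.
move=> rW.
exists (block_mx (col_ebase W) 0 0 1%:M *m row_ebase W); split.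
  rewrite unitmx_mul row_ebase_unit andbT unitmxE det_lblock det1 mulr1 -unitmxE.
  exact: col_ebase_unit.
rewrite -mul_usub_mx block_mxEv col_mxKu.
have := mulmx_ebase W; rewrite rW pid_mx_row mul_mx_row mulmx1 mulmx0 => ->.
by [].
Qed.


Lemma reduce k (B : 'M[F]_(k.*2.+2)) (W : 'M_(2, k.*2.+2)) (w2 : 'rV_(k.*2.+2)) :
  (forall D : 'M[F]_(k.*2), (forall b, (k <= \rank (D - b%:M)%R)%N) ->
      exists L : 'M_(k, k.*2), \rank L = k /\ good D L) ->
  (forall b, (k.+1 <= \rank (B - b%:M)%R)%N) ->
  \rank W = 2%N -> (W *m B <= W)%MS -> (w2 <= W)%MS -> ~~ (w2 *m B <= w2)%MS ->
  (forall b, (k.+2 <= \rank (B - b%:M)%R)%N || ~~ (W <= (B - b%:M)%R)%MS) ->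
  exists L : 'M_(k.+1, k.*2.+2), \rank L = k.+1 /\ good B L.
Proof.
move=> IH hB rW sW w2W w2n hW.
have [P [Pu PW]] := @complete_basis k.*2 W rW.
pose B' := P *m B *m invmx P.
have Pf : row_free P by rewrite row_free_unit.
have uB : usubmx B' *m P = W *m B.
  by rewrite mul_usub_mx /B' mulmxKV // -mul_usub_mx PW.
have [Cm eC] := submxP sW.
have uB2 : usubmx B' = row_mx Cm 0.
  apply: (can_inj (mulmxK Pu)).
  by rewrite uB eC -[in RHS](vsubmxK P) mul_row_col mul0mx addr0 PW.
have B'E : B' = block_mx Cm 0 (dlsubmx B') (drsubmx B').
  rewrite -{1}[B']submxK; congr block_mx.
    by rewrite /ulsubmx uB2 row_mxKl.
  by rewrite /ursubmx uB2 row_mxKr.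
set X := dlsubmx B'; set D := drsubmx B'.
have hD : forall b, (k <= \rank (D - b%:M)%R)%N.
  move=> b.
  have e1 : B' - b%:M = block_mx (Cm - b%:M) 0 X (D - b%:M).
    by rewrite B'E (scalar_mx_block 2 k.*2 b) opp_block_mx add_block_mx !oppr0 !addr0.
  have e2 : B' - b%:M = P *m (B - b%:M) *m invmx P.
    by rewrite /B' mulmxBr mulmxBl mul_mx_scalar -scalemxAl mulmxV // scalemx1.
  have Pif : row_free (invmx P) by rewrite row_free_unit unitmx_inv.
  have Pfu : row_full P by rewrite row_full_unit.
  have e3 : \rank (B' - b%:M) = \rank (B - b%:M).
    by rewrite e2 mxrankMfree // (eqmxMfull _ Pfu).
  have [r1 r2] := rank_block_le (Cm - b%:M) X (D - b%:M).
  rewrite -e1 e3 in r1 r2.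
  have r1' : (\rank (B - b%:M)%R <= \rank (D - b%:M)%R + 2)%N by exact: r1.
  have := hB b.
  case/orP: (hW b) => h; first by move=> _; rewrite -(leq_add2r 2) addn2; exact: leq_trans h r1'.
  move=> hb; suff H : (\rank (B - b%:M)%R <= \rank (D - b%:M)%R + 1)%N.
    by rewrite -(leq_add2r 1) addn1; exact: leq_trans hb H.
  apply: (r2 : _ -> (\rank (B - b%:M)%R <= \rank (D - b%:M)%R + 1)%N). apply: contra h => h.
  have WE : W = row_mx (1%:M : 'M_2) (0 : 'M_(2, k.*2)) *m P.
    rewrite -PW -[P in usubmx P]mul1mx -mul_usub_mx (scalar_mx_block 2 k.*2 1).
    by rewrite block_mxEv col_mxKu.
  rewrite WE; apply: submx_trans (submxMr P h) _.
  by rewrite e2 mulmxKV // submxMl.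
have [L2 [rL2 gL2]] := IH D hD.
have [a ea] := submxP w2W.
have a0 : a != 0.
  apply: contra w2n => /eqP a0; rewrite ea a0 !mul0mx; exact: sub0mx.
have ga : good Cm a.
  move=> u /sub_rVP[c ->] /sub_rVP[d].
  move=> /(congr1 (mulmx^~ W)) /=.
  rewrite -!scalemxAl -mulmxA -eC mulmxA -ea.
  have [->|c0] := eqVneq c 0; first by move=> _; rewrite scale0r.
  move=> E; case/negP: w2n.
  have -> : w2 *m B = (c^-1 * d) *: w2.
    by rewrite -scalerA -E scalerA mulVf // scale1r.
  exact: scalemx_sub.
pose L' : 'M_(1 + k, 2 + k.*2) := block_mx a 0 0 L2.
have gB' : good B' L' by rewrite /L' B'E; exact: good_block.
exists (L' *m P); split.
  by rewrite mxrankMfree // /L' (rank_diag_block_mx a L2) rL2 rank_rV a0.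
exact: good_conj.
Qed.
End Aux.
Section Eig.
Variable F : closedFieldType.

Lemma eig_exists d (A : 'M[F]_d) : (0 < d)%N -> exists a, eigenvalue A a.
Proof.
move=> d0; have /closed_rootP [a rAa] : size (char_poly A) != 1%N.
  by rewrite size_char_poly; case: d d0 A.
by exists a; rewrite eigenvalue_root_char.
Qed.

Lemma eig_in_stable d r (B : 'M[F]_d) (S : 'M_(r, d)) :
  (S *m B <= S)%MS -> S != 0 ->
  exists w : 'rV_d, exists a, [/\ w != 0, (w <= S)%MS & w *m B = a *: w].
Proof.
move=> sS S0.
pose V := row_base S.
have sV : (V *m B <= V)%MS by rewrite stablemx_row_base.
have fV : row_free V := row_base_free S.
have rS : (0 < \rank S)%N by rewrite lt0n mxrank_eq0.
have [a /eigenvalueP [x xa x0]] := eig_exists (conjmx V B) rS.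
have : (x <= eigenspace (conjmx V B) a)%MS by apply/eigenspaceP.
rewrite sub_eigenspace_conjmx // => /eigenspaceP xVa.
exists (x *m V), a; split => //.
  by rewrite mulmx_free_eq0.
by rewrite (submx_trans (submxMl x V)) // eq_row_base.
Qed.

Lemma eig_sub_im d m (B : 'M[F]_d) (W : 'M_(m, d)) (mu b : F) :
  W *m B = mu *: W -> mu != b -> (W <= B - b%:M)%MS.
Proof.
move=> WB mb.
have E : W *m (B - b%:M) = (mu - b) *: W.
  by rewrite mulmxBr WB mul_mx_scalar scalerBl.
have -> : W = (mu - b)^-1 *: (W *m (B - b%:M)).
  by rewrite E scalerA mulVf ?scale1r // subr_eq0.
by rewrite scalemx_sub // submxMl.
Qed.

Lemma indep2 d (B : 'M[F]_d) (e f : 'rV_d) (l m a b : F) :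
  e *m B = l *: e -> f *m B = m *: f -> e != 0 -> f != 0 -> l != m ->
  a *: e + b *: f = 0 -> a = 0 /\ b = 0.
Proof.
move=> eB fB e0 f0 lm E.
have E2 : (a *: e + b *: f) *m (B - l%:M) = (b * (m - l)) *: f.
  rewrite mulmxDl -!scalemxAl !mulmxBr eB fB !mul_mx_scalar subrr scaler0 add0r.
  by rewrite -scalerBl scalerA.
rewrite E mul0mx in E2.
have b0 : b = 0.
  move/eqP: E2; rewrite eq_sym scaler_eq0 (negbTE f0) orbF mulf_eq0 subr_eq0.
  by rewrite [m == l]eq_sym (negbTE lm) orbF => /eqP.
split => //.
move/eqP: E; rewrite b0 scale0r addr0 scaler_eq0 (negbTE e0) orbF.
by move/eqP.
Qed.




Lemma stable_col n (B : 'M[F]_n) (x y : 'rV_n) :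
  (x *m B <= col_mx x y)%MS -> (y *m B <= col_mx x y)%MS ->
  (col_mx x y *m B <= col_mx x y)%MS.
Proof. by move=> h1 h2; rewrite mul_col_mx col_mx_sub h1 h2. Qed.

Definition Output k (B : 'M[F]_(k.*2.+2)) :=
  exists (W : 'M_(2, k.*2.+2)) (w2 : 'rV_(k.*2.+2)),
  [/\ \rank W = 2%N, (W *m B <= W)%MS, (w2 <= W)%MS, ~~ (w2 *m B <= w2)%MS &
      forall b, (k.+2 <= \rank (B - b%:M)%R)%N || ~~ (W <= (B - b%:M)%R)%MS].

Lemma T1_ok k (B : 'M[F]_(k.*2.+2)) (e f : 'rV_(k.*2.+2)) (l m : F) :
  e *m B = l *: e -> f *m B = m *: f -> e != 0 -> f != 0 -> l != m ->
  (forall b, ~~ (k.+2 <= \rank (B - b%:M)%R)%N ->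
     (b = l /\ ~~ (e <= (B - l%:M)%R)%MS) \/ (b = m /\ ~~ (f <= (B - m%:M)%R)%MS)) ->
  Output B.
Proof.
move=> eB fB e0 f0 lm hP.
have ind := indep2 eB fB e0 f0 lm.
pose W := col_mx e (e + f).
have eW : (e <= W)%MS by rewrite /W -addsmxE addsmxSl.
have efW : ((e + f)%R <= W)%MS by rewrite /W -addsmxE addsmxSr.
have fW : (f <= W)%MS.
  have -> : f = (e + f) - e by rewrite addrAC subrr add0r.
  by rewrite addmx_sub // eqmx_opp.
exists W, (e + f); split => //.
- apply: rank2 => //; apply/negP => /sub_rVP [c E].
  have : (1 - c) *: e + 1 *: f = 0 by rewrite scalerBl !scale1r addrAC E subrr.
  by case/ind => _ /eqP; rewrite oner_eq0.
- apply: stable_col; rewrite -/W; first by rewrite eB scalemx_sub.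
  by rewrite mulmxDl eB fB addmx_sub // scalemx_sub.
- apply/negP => /sub_rVP [s E]; rewrite mulmxDl eB fB in E.
  have : (l - s) *: e + (m - s) *: f = 0.
    by rewrite !scalerBl addrACA E scalerDr -opprD subrr.
  case/ind => /eqP; rewrite subr_eq0 => /eqP ls /eqP; rewrite subr_eq0 => /eqP ms.
  by rewrite ls ms eqxx in lm.
- move=> b; case: (boolP (k.+2 <= _)%N) => //= nP.
  case: (hP b nP) => [[-> He]|[-> Hf]].
    by apply: contra He => H; exact: submx_trans eW H.
  by apply: contra Hf => H; exact: submx_trans fW H.
Qed.

Lemma T2_ok k (B : 'M[F]_(k.*2.+2)) (v : 'rV_(k.*2.+2)) (l : F) :
  v *m (B - l%:M) != 0 -> v *m (B - l%:M) *m (B - l%:M) = 0 ->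
  (forall b, ~~ (k.+2 <= \rank (B - b%:M)%R)%N -> b = l /\ ~~ (v <= (B - l%:M)%R)%MS) ->
  Output B.
Proof.
move=> vN0 vNN hP.
have eB : B = (B - l%:M) + l%:M by rewrite subrK.
pose W := col_mx (v *m (B - l%:M)) v.
have aW : (v *m (B - l%:M)%R <= W)%MS by rewrite /W -addsmxE addsmxSl.
have vW : (v <= W)%MS by rewrite /W -addsmxE addsmxSr.
have vB : v *m B = v *m (B - l%:M) + l *: v by rewrite {1}eB mulmxDr mul_mx_scalar.
have aB : v *m (B - l%:M) *m B = l *: (v *m (B - l%:M)).
  by rewrite {2}eB mulmxDr vNN mul_mx_scalar add0r.
exists W, v; split => //.
- apply: rank2 => //; apply/negP => /sub_rVP [c E].
  have : v *m (B - l%:M) = 0 by rewrite {1}E -scalemxAl vNN scaler0.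
  by move/eqP; rewrite (negbTE vN0).
- apply: stable_col; rewrite -/W; first by rewrite aB scalemx_sub.
  by rewrite vB addmx_sub // scalemx_sub.
- apply/negP => /sub_rVP [s E].
  have h : v *m (B - l%:M) = (s - l) *: v by rewrite scalerBl -E vB addrK.
  have h2 : (s - l) *: (v *m (B - l%:M)) = 0 by rewrite scalemxAl -h vNN.
  move/eqP: h2; rewrite scaler_eq0 (negbTE vN0) orbF => /eqP sl.
  by rewrite sl scale0r in h; rewrite h eqxx in vN0.
- move=> b; case: (boolP (k.+2 <= _)%N) => //= nP.
  have [-> Hv] := hP b nP.
  by apply: contra Hv => H; exact: submx_trans vW H.
Qed.


Lemma chain d (B : 'M[F]_d) (l : F) :
  (forall m (f : 'rV_d), f *m B = m *: f -> f != 0 -> m = l) ->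
  B - l%:M != 0 ->
  exists u : 'rV_d, u *m (B - l%:M) != 0 /\ u *m (B - l%:M) *m (B - l%:M) = 0.
Proof.
move=> noM N0.
have sN : ((B - l%:M) *m B <= B - l%:M)%MS.
  have -> : (B - l%:M) *m B = B *m (B - l%:M).
    by rewrite mulmxBl mulmxBr mul_mx_scalar mul_scalar_mx.
  exact: submxMl.
have [w [a [w0 wN wB]]] := eig_in_stable sN N0.
have al := noM a w wB w0.
have [u uE] := submxP wN.
exists u; rewrite -uE; split => //.
by rewrite mulmxBr wB al mul_mx_scalar subrr.
Qed.

Lemma exists_nz d (N : 'M[F]_d) : N != 0 -> exists v : 'rV_d, v *m N != 0.
Proof.
move=> N0; case: (pickP (fun i => row i N != 0)) => [i Hi|H].
  by exists (delta_mx 0 i); rewrite -rowE.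
case/negP: N0; apply/eqP/row_matrixP => i; rewrite row0.
by move: (H i) => /negbFE /eqP.
Qed.

Lemma eig_uniq d (B : 'M[F]_d) (f : 'rV_d) (m b : F) :
  f != 0 -> f *m B = m *: f -> f *m B = b *: f -> m = b.
Proof.
move=> f0 h1; rewrite h1 => /eqP; rewrite -subr_eq0 -scalerBl scaler_eq0 (negbTE f0).
by rewrite orbF subr_eq0 => /eqP.
Qed.


Lemma stepA k (B : 'M[F]_(k.*2.+2)) :
  (forall b, (k.+1 <= \rank (B - b%:M)%R)%N) -> Output B.
Proof.
move=> hB.
pose Prob b := ~~ (k.+2 <= \rank (B - b%:M)%R)%N.
have Prank : forall b, Prob b -> \rank (B - b%:M) = k.+1.
  move=> b Pb; apply/eqP; rewrite eqn_leq hB andbT -ltnS.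
  by rewrite ltnNge.
have Peig : forall b, Prob b -> \rank (eigenspace B b) = k.+1.
  move=> b Pb; rewrite /eigenspace mxrank_ker Prank //.
  by rewrite -addnn subSS -addSn addnK.
have eig0 : forall b, Prob b -> exists x : 'rV_(k.*2.+2), x != 0 /\ x *m B = b *: x.
  move=> b Pb; have : eigenvalue B b by rewrite /eigenvalue -mxrank_eq0 Peig.
  by case/eigenvalueP => x xB x0; exists x.
have eigE : forall b, eigenspace B b *m B = b *: eigenspace B b.
  by move=> b; apply/eigenspaceP.
have F2 : forall a b, Prob a -> Prob b -> a != b -> (B - a%:M <= eigenspace B b)%MS.
  move=> a b Pa Pb ab.
  have s : (eigenspace B b <= B - a%:M)%MS by apply: eig_sub_im (eigE b) _; rewrite eq_sym.
  by rewrite -(geq_leqif (mxrank_leqif_sup s)) Peig // Prank.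
have N0 : forall l, B - l%:M != 0.
  by move=> l; rewrite -mxrank_eq0 -lt0n; exact: leq_trans _ (hB l).
case: (classic (exists l, Prob l)) => [[l Pl]|noP]; last first.
  have [l /eigenvalueP [e eB e0]] := eig_exists B (ltn0Sn _).
  case: (classic (exists m (f : 'rV_(k.*2.+2)), [/\ m != l, f *m B = m *: f & f != 0])).
    move=> [m [f [ml fB f0]]].
    apply: (T1_ok eB fB e0 f0 _) => [|b Pb]; first by rewrite eq_sym.
    by exfalso; apply: noP; exists b.
  move=> noM.
  have noM' : forall m (f : 'rV_(k.*2.+2)), f *m B = m *: f -> f != 0 -> m = l.
    move=> m f fB f0; case: (eqVneq m l) => // ml.
    by exfalso; apply: noM; exists m, f.
  have [u [uN uNN]] := chain noM' (N0 l).
  apply: (T2_ok uN uNN) => b Pb.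
  by exfalso; apply: noP; exists b.
case: (classic (exists (e f : 'rV_(k.*2.+2)) m,
   [/\ (e <= eigenspace B l)%MS, ~~ (e <= B - l%:M)%MS, m != l, f *m B = m *: f & f != 0])).
  move=> [e [f [m [eE eN ml fB f0]]]].
  have eB : e *m B = l *: e by apply/eigenspaceP.
  have e0 : e != 0 by apply: contra eN => /eqP ->; rewrite sub0mx.
  apply: (T1_ok eB fB e0 f0 _) => [|b Pb]; first by rewrite eq_sym.
  case: (eqVneq b l) => [->|bl]; first by left.
  right; case: (eqVneq b m) => [bm|bm].
    subst b; split => //; apply/negP => fN.
    have : (f <= eigenspace B l)%MS by apply: submx_trans fN (F2 _ _ Pb Pl ml).
    move/eigenspaceP => fB'.
    by move: ml; rewrite (eig_uniq f0 fB fB') eqxx.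
  exfalso.
  have fN : (f <= B - l%:M)%MS by apply: eig_sub_im fB ml.
  have : (f <= eigenspace B b)%MS.
    by apply: submx_trans fN (F2 _ _ Pl Pb _); rewrite eq_sym.
  move/eigenspaceP => fB'.
  by move: bm; rewrite (eig_uniq f0 fB fB') eqxx.
move=> noI.
case: (boolP (eigenspace B l <= B - l%:M)%MS) => [EN|nEN].
  have NE : (B - l%:M <= eigenspace B l)%MS.
    by rewrite -(geq_leqif (mxrank_leqif_sup EN)) Peig // Prank.
  have [v vN0] := exists_nz (N0 l).
  have vNN : v *m (B - l%:M) *m (B - l%:M) = 0.
    apply/sub_kermxP; exact: submx_trans (submxMl v _) NE.
  apply: (T2_ok vN0 vNN) => b Pb.
  case: (eqVneq b l) => [->|bl].
    split => //; apply/negP => vN.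
    have : (v <= eigenspace B l)%MS by exact: submx_trans vN NE.
    by move/sub_kermxP => vN'; rewrite vN' eqxx in vN0.
  exfalso.
  have [x [x0 xB]] := eig0 l Pl.
  have : (x <= eigenspace B b)%MS.
    apply: submx_trans (F2 _ _ Pl Pb _); last by rewrite eq_sym.
    by apply: submx_trans EN; apply/eigenspaceP.
  move/eigenspaceP => xB'.
  by move: bl; rewrite (eig_uniq x0 xB xB') eqxx.
have [i Hi] : exists i, ~~ (row i (eigenspace B l) <= B - l%:M)%MS.
  case: (pickP (fun i => ~~ (row i (eigenspace B l) <= B - l%:M)%MS)) => [i Hi|H].
    by exists i.
  case/negP: nEN; apply/row_subP => i.
  by move: (H i) => /negbFE.
set e := row i (eigenspace B l) in Hi.
have eE : (e <= eigenspace B l)%MS by exact: row_sub.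
have eN : e *m (B - l%:M) = 0 by apply/sub_kermxP.
have noM' : forall m (f : 'rV_(k.*2.+2)), f *m B = m *: f -> f != 0 -> m = l.
  move=> m f fB f0; case: (eqVneq m l) => // ml.
  by exfalso; apply: noI; exists e, f, m.
have [u [uN uNN]] := chain noM' (N0 l).
have T2' : forall v : 'rV_(k.*2.+2), v *m (B - l%:M) != 0 ->
    v *m (B - l%:M) *m (B - l%:M) = 0 -> ~~ (v <= B - l%:M)%MS -> Output B.
  move=> v vN0 vNN vN; apply: (T2_ok vN0 vNN) => b Pb; split => //.
  case: (eqVneq b l) => // bl; exfalso.
  have [x [x0 xB]] := eig0 b Pb.
  by move: bl; rewrite (noM' _ _ xB x0) eqxx.
case: (boolP (u <= B - l%:M)%MS) => uN'; last exact: T2' u uN uNN uN'.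
have E : (u + e) *m (B - l%:M) = u *m (B - l%:M) by rewrite mulmxDl eN addr0.
apply: (T2' (u + e)); rewrite ?E //.
apply: contra Hi => H.
have -> : e = (u + e) - u by rewrite addrC addKr.
by rewrite addmx_sub // eqmx_opp.
Qed.

End Eig.

Lemma main_ind (F : closedFieldType) k : forall B : 'M[F]_(k.*2),
  (forall b, (k <= \rank (B - b%:M)%R)%N) ->
  exists L : 'M_(k, k.*2), \rank L = k /\ good B L.
Proof.
elim: k => [|k IH] B hB.
  exists 0; split; first by rewrite mxrank0.
  by move=> u _ _; rewrite [u]thinmx0.
have [W [w2 [rW sW w2W w2n hW]]] := @stepA F k B hB.
exact: (@reduce F k B W w2 IH hB rW sW w2W w2n hW).
Qed.

Theorem lemma5p4 (R : realType) (n : nat) (A : 'M[R[i]]_(n.*2.+2)) :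
  (1 <= n)%N ->
  A \in unitmx ->
  (forall alpha : R[i], (n.+1 <= \rank (A - alpha%:M)%R)%N) ->
  exists L : 'M[R[i]]_(n.+1, n.*2.+2),
    \rank L = n.+1 /\ \rank (L :&: mx_image A L)%MS = 0%N.
Proof.
move=> _ Au hA.
have hB : forall b : R[i], (n.+1 <= \rank (A^T - b%:M)%R)%N.
  move=> b; rewrite -mxrank_tr linearB /= trmxK tr_scalar_mx; exact: hA.
have [L [rL gL]] := @main_ind R[i] n.+1 A^T hB.
exists L; split => //.
apply/eqP; rewrite mxrank_eq0 -submx0; apply/rV_subP => x.
rewrite sub_capmx /mx_image => /andP[xL /submxP[y xE]].
have u0 : y *m L = 0.
  apply: gL; first exact: submxMl.
  by rewrite -mulmxA -xE.
by rewrite xE mulmxA u0 mul0mx sub0mx.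
Qed.
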